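(* Let $R$ be a finite Frobenius ring and let $R/\mathrm{rad}(R)\cong(\mathbb{F}_{q_1})^{m_1\times m_1}\times\cdots\times(\mathbb{F}_{q_t})^{m_t\times m_t}$ be its Wedderburn–Artin decomposition (prime powers $q_i$, positive integers $m_i$). Let $\omega$ be the normalized homogeneous weight on $R$. Then there exists $x\in R\setminus\{0\}$ with $\omega(x)=0$ if and only if $(q_i,m_i)=(2,1)$ for at least two indices $i\in\{1,\ldots,t\}$.
   Context: $\mathrm{rad}(R)$ is the Jacobson radical. The normalized homogeneous weight on a finite Frobenius ring $R$ is the unique map $\omega:R\to\mathbb{R}$ with $\omega(0)=0$, $\omega(x)=\omega(y)$ whenever $Rx=Ry$, and $\sum_{y\in Rx}\omega(y)=|Rx|$ for every $x\in R\setminus\{0\}$. *)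

(* Defs.v *)
From mathcomp Require Import all_boot all_order all_algebra.
From mathcomp Require Import reals.
Set Implicit Arguments. Unset Strict Implicit. Unset Printing Implicit Defensive.
Import GRing.Theory.
Local Open Scope ring_scope.

Section RingDefs.
Variable R : finNzRingType.

Definition is_lideal (I : {set R}) : bool :=
  [&& (0 : R) \in I, [forall x in I, forall y in I, x - y \in I]
    & [forall r : R, forall x in I, r * x \in I]].
Definition is_rideal (I : {set R}) : bool :=
  [&& (0 : R) \in I, [forall x in I, forall y in I, x - y \in I]
    & [forall r : R, forall x in I, x * r \in I]].

Definition is_max_lideal (I : {set R}) : bool :=
  [&& is_lideal I, I != setT &
      [forall J : {set R}, (is_lideal J && (I \proper J)) ==> (J == setT)]].

Definition jrad : {set R} := [set x | [forall I : {set R}, is_max_lideal I ==> (x \in I)]].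

Definition is_min_lideal (I : {set R}) : bool :=
  [&& is_lideal I, I != [set 0] &
      [forall J : {set R}, (is_lideal J && (J \proper I)) ==> (J == [set 0])]].
Definition is_min_rideal (I : {set R}) : bool :=
  [&& is_rideal I, I != [set 0] &
      [forall J : {set R}, (is_rideal J && (J \proper I)) ==> (J == [set 0])]].

(* socles: sum of all minimal left (resp. right) ideals, i.e. the smallest
   left (resp. right) ideal containing all of them *)
Definition soc_l : {set R} :=
  \bigcap_(J : {set R} | is_lideal J && [forall I : {set R}, is_min_lideal I ==> (I \subset J)]) J.
Definition soc_r : {set R} :=
  \bigcap_(J : {set R} | is_rideal J && [forall I : {set R}, is_min_rideal I ==> (I \subset J)]) J.

(* R is Frobenius: _R(R/rad R) ~= soc(_R R) and (R/rad R)_R ~= soc(R_R).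
   An isomorphism R/rad R ~= S of modules is given (first isomorphism theorem)
   by a module homomorphism f : R -> R with kernel rad R and image S. *)
Definition frobenius : Prop :=
  (exists f : R -> R,
     [/\ forall x y, f (x + y) = f x + f y,
         forall r x, f (r * x) = r * f x,
         forall x, (f x == 0) = (x \in jrad) &
         forall y, (y \in soc_l) <-> exists x, f x = y])
  /\
  (exists f : R -> R,
     [/\ forall x y, f (x + y) = f x + f y,
         forall r x, f (x * r) = f x * r,
         forall x, (f x == 0) = (x \in jrad) &
         forall y, (y \in soc_r) <-> exists x, f x = y]).

Definition lprinc (x : R) : {set R} := [set r * x | r : R].

Definition normalized_homogeneous_weight (K : realType) (w : R -> K) : Prop :=
  [/\ w 0 = 0,
      forall x y, lprinc x = lprinc y -> w x = w y &
      forall x, x != 0 -> \sum_(y in lprinc x) w y = (#|lprinc x|)%:R].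

(* Wedderburn-Artin decomposition R/rad R ~= prod_{i<t} M_{m i}(F i):
   a family of ring homomorphisms phi i : R -> M_{m i}(F i) whose product map
   is surjective with kernel rad R. *)
Definition wedderburn_artin (t : nat) (F : 'I_t -> finFieldType) (m : 'I_t -> nat)
  (phi : forall i, R -> 'M[F i]_(m i)) : Prop :=
  (forall i, (0 < m i)%N) /\
  [/\ forall i x y, phi i (x + y) = phi i x + phi i y,
      forall i x y, phi i (x * y) = phi i x *m phi i y,
      forall i, phi i 1 = 1%:M,
      (forall A : forall i, 'M[F i]_(m i), exists x, forall i, phi i x = A i) &
      forall x, (forall i, phi i x = 0) <-> x \in jrad].

End RingDefs.

(* Main.v *)
Require Import Defs.
From mathcomp Require Import all_boot all_order all_algebra.
From mathcomp Require Import reals.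
From mathcomp Require Import zify ring lra.
Local Open Scope ring_scope.

Module Aux.
Set Implicit Arguments. Unset Strict Implicit. Unset Printing Implicit Defensive.
Import Order.TTheory GRing.Theory Num.Theory.

Section C.
Variable K : numFieldType.
Definition cc (q m r : nat) : K := \prod_(j < r) (- ((q ^ (m - j))%:R - 1)^-1).

Lemma ccS q m r : cc q m r.+1 = cc q m r * (- ((q ^ (m - r))%:R - 1)^-1).
Proof. by rewrite /cc big_ord_recr. Qed.

Lemma cc0 q m : cc q m 0 = 1.
Proof. by rewrite /cc big_ord0. Qed.

Lemma expn_gt1 q k : (1 < q)%N -> (0 < k)%N -> (1 < q ^ k)%N.
Proof. move=> q1 k0; rewrite -(expn0 q) ltn_exp2l //. Qed.

Lemma cc_key q m r : (1 < q)%N -> (r < m)%N ->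
  (q ^ r)%:R * cc q m r + ((q ^ m)%:R - (q ^ r)%:R) * cc q m r.+1 = 0 :> K.
Proof.
move=> q1 rm; rewrite ccS.
have -> : (q ^ m = q ^ r * q ^ (m - r))%N by rewrite -expnD subnKC // ltnW.
have h : ((q ^ (m - r))%:R - 1 : K) != 0.
  rewrite subr_eq0 pnatr_eq1; have := expn_gt1 q1 (_ : (0 < m - r)%N).
  by move=> /(_ ltac:(lia)); case: (q ^ (m - r))%N => [|[]].
rewrite natrM; set a := (q ^ r)%:R; set b := _ - 1.
have -> : a * (q ^ (m - r))%:R - a = a * b by rewrite /b mulrBr mulr1.
by field.
Qed.
End C.
Section M.
Variable F : finFieldType.

Lemma rank_colmx n m (v : 'rV[F]_m) (Y : 'M[F]_(n,m)) :
  \rank (col_mx v Y) = (\rank Y + ~~ (v <= Y)%MS)%N.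
Proof.
rewrite -addsmxE; case: (boolP (v <= Y)%MS) => vY.
  by rewrite addn0 (addsmx_idPr vY).
have lt : (Y < v + Y)%MS by rewrite ltmxE addsmxSr /=; move: vY; apply: contra => h; apply: submx_trans h; apply: addsmxSl.
rewrite ltmxErank in lt; case/andP: lt => _ lt.
have := mxrank_adds_leqif v Y; case=> le _; rewrite rank_rV in le.
move: le lt; case: (v != 0) => /=; lia.
Qed.

Lemma card_sub n m (Y : 'M[F]_(n,m)) :
  #|[set v : 'rV[F]_m | (v <= Y)%MS]| = (#|F| ^ \rank Y)%N.
Proof.
have -> : [set v : 'rV[F]_m | (v <= Y)%MS] =
   (fun u => u *m row_base Y) @: [set: 'rV[F]_(\rank Y)].
  apply/setP => v; rewrite inE; apply/idP/imsetP.
    rewrite -(eq_row_base Y) => /submxP [u ->]; by exists u; rewrite ?inE.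
  by case=> u _ ->; rewrite -(eq_row_base Y) submxMl.
rewrite card_imset; last exact: row_free_inj (row_base_free Y).
by rewrite cardsT card_mx mul1n.
Qed.
Variable K : numFieldType.
Local Notation c := (cc K #|F|).

Lemma card_F1 : (1 < #|F|)%N.
Proof.
rewrite (cardD1 (0:F)) (cardD1 (1:F)) !inE oner_eq0 /=; lia.
Qed.

Lemma sum_v n m (Y : 'M[F]_(n,m)) : (\rank Y < m)%N ->
  \sum_(v : 'rV[F]_m) c m (\rank (col_mx v Y)) = 0.
Proof.
move=> rm; set r := \rank Y.
transitivity (\sum_(v : 'rV[F]_m) (c m r.+1 +
   (if v \in [set v : 'rV[F]_m | (v <= Y)%MS] then c m r - c m r.+1 else 0))).
  apply: eq_bigr => v _; rewrite rank_colmx inE; case: (v <= Y)%MS => /=.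
    by rewrite addn0 addrC subrK.
  by rewrite addn1 addr0.
rewrite big_split /=.
have -> : \sum_(v : 'rV[F]_m) c m r.+1 = c m r.+1 *+ (#|F| ^ m)%N.
  rewrite sumr_const [X in _ *+ X = _]eq_cardT; last by [].
  by rewrite -cardT card_mx mul1n.
rewrite -big_mkcond sumr_const card_sub.
rewrite -[_ *+ (#|F| ^ m)%N]mulr_natl -[_ *+ (#|F| ^ \rank Y)%N]mulr_natl.
rewrite -(cc_key K card_F1 rm) /r; ring.
Qed.

Lemma sum_Y d m : (0 < d)%N -> (d <= m)%N ->
  \sum_(Y : 'M[F]_(d, m)) c m (\rank Y) = 0.
Proof.
case: d => // d _ dm.
rewrite (reindex (fun p : 'rV[F]_m * 'M[F]_(d, m) => (col_mx p.1 p.2 : 'M_(d.+1, m)))) /=; last first.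
  exists (fun Y : 'M[F]_(1 + d, m) => (usubmx Y, dsubmx Y)) => [[a b] _ | Y _] /=.
    by rewrite col_mxKu col_mxKd.
  by rewrite vsubmxK.
rewrite -(pair_big xpredT xpredT (fun a b => c m (\rank (col_mx a b)))) /=.
rewrite exchange_big big1 // => Y _; apply: sum_v.
by apply: leq_ltn_trans (rank_leq_row Y) _.
Qed.

Lemma sum_AZ m (Z : 'M[F]_m) : Z != 0 ->
  \sum_(A : 'M[F]_m) c m (\rank (A *m Z)) = 0.
Proof.
move=> Z0; set cb := col_base Z.
have rk A : \rank (A *m Z) = \rank (A *m cb).
  by rewrite -{1}(mulmx_base Z) mulmxA mxrankMfree // row_base_free.
under eq_bigr do rewrite rk.
have [L HL] := row_fullP (col_base_full Z).
set S := \sum_A _.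
have shift (Y : 'M[F]_(m, \rank Z)) : S = \sum_(A : 'M[F]_m) c m (\rank (A *m cb + Y)%R).
  rewrite /S (reindex_inj (addIr (Y *m L))) /=; apply: eq_bigr => A _.
  by rewrite /cb mulmxDl -mulmxA HL mulmx1.
have sY : \sum_(Y : 'M[F]_(m, \rank Z)) c m (\rank Y) = 0.
  rewrite (reindex (@trmx F (\rank Z) m)) /=; last by exists (@trmx F m (\rank Z)) => X _; rewrite trmxK.
  under eq_bigr do rewrite mxrank_tr.
  apply: sum_Y; first by rewrite lt0n mxrank_eq0.
  exact: rank_leq_row.
have : \sum_(Y : 'M[F]_(m, \rank Z)) S = 0.
  rewrite (eq_bigr _ (fun Y _ => shift Y)) exchange_big /= big1 // => A _.
  rewrite (reindex_inj (addrI (- (A *m cb)))) /=.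
  by under eq_bigr do rewrite addNKr.
rewrite sumr_const [X in _ *+ X = _]eq_cardT; last by [].
rewrite -cardT card_mx -mulr_natl => /eqP; rewrite mulf_eq0 pnatr_eq0 => /orP [|/eqP //].
by rewrite expn_eq0 => /andP [] /eqP h; have := card_F1; rewrite h.
Qed.
End M.

Section CC.
Variable K : realType.

Lemma fac_le1 q m j : (1 < q)%N -> (j < m)%N ->
  0 <= `|- (((q ^ (m - j))%:R : K) - 1)^-1| <= 1.
Proof.
move=> q1 jm; rewrite normr_ge0 /= normrN normfV.
have h : (2 <= q ^ (m - j))%N by apply: expn_gt1 => //; lia.
have h2 : (2 : K) <= (q ^ (m - j))%:R by rewrite (ler_nat K 2).
rewrite ger0_norm; last by lra.
by rewrite invf_le1; lra.
Qed.

Lemma prod_le1 (I : finType) (P : pred I) (G : I -> K) :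
  (forall i, P i -> 0 <= `|G i| <= 1) -> `|\prod_(i | P i) G i| <= 1.
Proof. by move=> h; rewrite normr_prod; apply: prodr_ile1. Qed.

Lemma cc_le1 q m r : (1 < q)%N -> (r <= m)%N -> `|cc K q m r| <= 1.
Proof.
move=> q1 rm; apply: prod_le1 => j _; apply: fac_le1 => //.
by apply: leq_trans (ltn_ord j) rm.
Qed.

Lemma cc_lt1 q m r : (1 < q)%N -> (0 < r)%N -> (r <= m)%N ->
  ~~ ((q == 2) && (m == 1))%N -> `|cc K q m r| < 1.
Proof.
case: r => // r q1 _ rm hq; rewrite /cc big_ord_recl normrM.
have h1 : `|\prod_(i < r) (- (((q ^ (m - bump 0 i))%:R : K) - 1)^-1)| <= 1.
  apply: prod_le1 => j _; apply: fac_le1 => //.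
  have := ltn_ord j; rewrite /bump /=; lia.
have h3 : (3 <= q ^ (m - 0))%N.
  rewrite subn0; clear h1; case: m rm hq => // [[|m]] _ hq.
    by rewrite expn1; move: hq q1; case: q => [|[|[|q]]].
  rewrite expnS; have := expn_gt1 q1 (ltn0Sn m); nia.
have h2 : `|- (((q ^ (m - 0))%:R : K) - 1)^-1| < 1.
  have h4 : (3 : K) <= (q ^ (m - 0))%:R by rewrite (ler_nat K 3).
  rewrite normrN normfV ger0_norm; last by lra.
  by rewrite invf_lt1; lra.
have h0 : 0 <= `|\prod_(i < r) (- (((q ^ (m - bump 0 i))%:R : K) - 1)^-1)| by [].
set a := `|_ : K| in h2 *; set b := `|_ : K| in h1 h0 *.
have a0 : 0 <= a by rewrite /a.
nra.
Qed.

Lemma cc211 : cc K 2 1 1 = -1.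
Proof. by rewrite /cc big_ord1 subn0 expn1 (_ : 2%:R - 1 = 1 :> K) ?invr1 //; lra. Qed.

Lemma final_count t (q m r : 'I_t -> nat) :
  (forall i, 1 < q i)%N -> (forall i, r i <= m i)%N -> (exists j, r j != 0)%N ->
  \prod_i cc K (q i) (m i) (r i) = 1 ->
  (2 <= #|[set i | (q i == 2) && (m i == 1)]|)%N.
Proof.
move=> q1 rm [j rj] P1.
have good i : r i != 0%N -> (q i == 2) && (m i == 1).
  move=> ri; apply: contraT => bad.
  have ri0 : (0 < r i)%N by rewrite lt0n.
  have lt := cc_lt1 (q1 i) ri0 (rm i) bad.
  have : `|\prod_i0 cc K (q i0) (m i0) (r i0)| < 1.
    rewrite (bigD1 i) //= normrM.
    have le : `|\prod_(i0 < t | i0 != i) cc K (q i0) (m i0) (r i0)| <= 1.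
      by apply: prod_le1 => k _; rewrite normr_ge0 cc_le1.
    set a := `|_ : K| in lt *; set b := `|_ : K| in le *.
    have a0 : 0 <= a by rewrite /a. have b0 : 0 <= b by rewrite /b.
    nra.
  by rewrite P1 normr1 ltxx.
have ri1 i : r i != 0%N -> r i = 1%N.
  move=> ri; have := good i ri => /andP [_ /eqP mi]; have := rm i; rewrite mi.
  by move: ri; case: (r i) => [|[|]].
set T := [set i | r i != 0%N].
have : \prod_i cc K (q i) (m i) (r i) = (-1) ^+ #|T|.
  rewrite (bigID (fun i => i \in T)) /= [X in _ * X]big1 ?mulr1; last first.
    by move=> i; rewrite inE negbK => /eqP ->; rewrite cc0.
  rewrite -prodr_const; apply: eq_bigr => i iT.
  move: (iT); rewrite inE => ri; have := good i ri => /andP [/eqP -> /eqP ->].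
  by rewrite ri1 // cc211.
rewrite P1 -signr_odd; case: (boolP (odd #|T|)) => oT /=; first by move=> h; exfalso; lra.
move=> _.
have T1 : (0 < #|T|)%N by apply/card_gt0P; exists j; rewrite inE.
have T2 : (2 <= #|T|)%N by move: oT T1; case: #|T| => [|[|]].
apply: leq_trans T2 _; apply: subset_leq_card; apply/subsetP => i.
by rewrite !inE => /good.
Qed.
End CC.

Lemma sum_const_eq0 (K : numFieldType) (T : finType) (x0 : T) (a : K) :
  \sum_(i : T) a = 0 -> a = 0.
Proof.
rewrite sumr_const => /eqP; rewrite -mulr_natl mulf_eq0 pnatr_eq0 => /orP [/eqP h|/eqP //].
by have := card0_eq h x0.
Qed.

Section Ring.
Variables (R : finNzRingType) (K : realType) (t : nat) (F : 'I_t -> finFieldType)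
  (m : 'I_t -> nat) (phi : forall i, R -> 'M[F i]_(m i)) (f : R -> R).
Hypothesis phiD : forall i x y, phi i (x + y) = phi i x + phi i y.
Hypothesis phiM : forall i x y, phi i (x * y) = phi i x *m phi i y.
Hypothesis phiS : forall A : forall i, 'M[F i]_(m i), exists x, forall i, phi i x = A i.
Hypothesis phiK : forall x, (forall i, phi i x = 0) <-> x \in jrad R.
Hypothesis fD : forall x y, f (x + y) = f x + f y.
Hypothesis fM : forall r x, f (r * x) = r * f x.
Hypothesis fK : forall x, (f x == 0) = (x \in jrad R).

Lemma phi0 i : phi i 0 = 0.
Proof. by move: (phiD i 0 0); rewrite addr0 => /(congr1 (fun x => x - phi i 0)); rewrite subrr addrK. Qed.
Lemma phiN i x : phi i (- x) = - phi i x.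
Proof. by apply/eqP; rewrite -addr_eq0 -phiD addNr phi0. Qed.
Lemma phiB i x y : phi i (x - y) = phi i x - phi i y.
Proof. by rewrite phiD phiN. Qed.
Lemma f0 : f 0 = 0.
Proof. by move: (fD 0 0); rewrite addr0 => /(congr1 (fun x => x - f 0)); rewrite subrr addrK. Qed.
Lemma fN x : f (- x) = - f x.
Proof. by apply/eqP; rewrite -addr_eq0 -fD addNr f0. Qed.
Lemma fB x y : f (x - y) = f x - f y.
Proof. by rewrite fD fN. Qed.

Lemma phi_f x y : (forall i, phi i x = phi i y) <-> f x = f y.
Proof.
split.
  move=> h; apply/eqP; rewrite -subr_eq0 -fB fK; apply/phiK => i.
  by rewrite phiB h subrr.
move=> /eqP; rewrite -subr_eq0 -fB fK => /phiK h i.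
by apply/eqP; rewrite -subr_eq0 -phiB h.
Qed.

Lemma surj1 j (A : 'M[F j]_(m j)) :
  exists s, phi j s = A /\ forall i, i != j -> phi i s = 0.
Proof.
have [s hs] := phiS (dfwith (fun i => 0) A).
exists s; split; first by rewrite hs dfwith_in.
by move=> i ij; rewrite hs dfwith_out // eq_sym.
Qed.

Definition C (z : R) : K := \prod_(i < t) cc K #|F i| (m i) (\rank (phi i z)).

Lemma sumC z : z \notin jrad R -> \sum_(r : R) C (r * z) = 0.
Proof.
move=> zJ.
have [j hj] : exists j, phi j z != 0.
  apply/existsP; apply: contraR zJ; rewrite negb_exists => /forallP h.
  by apply/phiK => i; apply/eqP; have := h i; rewrite negbK.
set g := fun A : 'M[F j]_(m j) => cc K #|F j| (m j) (\rank (A *m phi j z)).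
set G := fun r : R => \prod_(i < t | i != j) cc K #|F i| (m i) (\rank (phi i (r * z))).
have eC r : C (r * z) = g (phi j r) * G r by rewrite /C (bigD1 j) //= phiM.
under eq_bigr do rewrite eC.
set S := \sum_r _.
have shift A : S = \sum_(r : R) g (phi j r + A) * G r.
  have [s [hs1 hs2]] := surj1 A.
  rewrite /S (reindex_inj (addIr s)) /=; apply: eq_bigr => r _.
  rewrite phiD hs1; congr (_ * _); rewrite /G; apply: eq_bigr => i ij.
  by rewrite mulrDl phiD (phiM i s) hs2 // mul0mx addr0.
apply: (@sum_const_eq0 K _ (0 : 'M[F j]_(m j))).
rewrite (eq_bigr _ (fun A _ => shift A)) exchange_big /= big1 // => r _.
rewrite -mulr_suml; apply/eqP; rewrite mulf_eq0; apply/orP; left; apply/eqP.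
rewrite (reindex_inj (addrI (- phi j r))) /=.
under eq_bigr do rewrite addNKr.
exact: sum_AZ.
Qed.

Lemma lprincP (y u : R) : reflect (exists r, u = r * y) (u \in lprinc y).
Proof.
apply: (iffP imsetP) => [[r _ ->]|[r ->]]; first by exists r.
by exists r.
Qed.

Lemma lprinc_self (y : R) : y \in lprinc y.
Proof. by apply/lprincP; exists 1; rewrite mul1r. Qed.

Lemma lprinc_sub (y u : R) : u \in lprinc y -> lprinc u \subset lprinc y.
Proof.
move=> /lprincP [r ->]; apply/subsetP => v /lprincP [s ->].
by apply/lprincP; exists (s * r); rewrite mulrA.
Qed.

Lemma fiber (y0 : R) (h : R -> K) : \sum_(r : R) h (r * y0) =
  #|[set r : R | r * y0 == 0]|%:R * \sum_(u in lprinc y0) h u.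
Proof.
rewrite (partition_big (fun r => r * y0) (mem (lprinc y0))) /=; last first.
  by move=> r _; apply/lprincP; exists r.
rewrite mulr_sumr; apply: eq_bigr => u /lprincP [r0 ->].
rewrite (eq_bigr (fun _ => h (r0 * y0))); last by move=> r /eqP ->.
rewrite sumr_const mulr_natl; congr (_ *+ _).
rewrite -[RHS](card_imset _ (addIr r0)); apply: eq_card => r.
apply/idP/imsetP.
  move=> /eqP e; exists (r - r0); last by rewrite subrK.
  by rewrite inE mulrBl e subrr.
case=> x; rewrite inE => /eqP e ->; rewrite /in_mem /= mulrDl e add0r; apply: eqxx.
Qed.

Definition D (y : R) : K := C (odflt 0 [pick z | f z == y]).

Lemma C_eq z z' : (forall i, phi i z = phi i z') -> C z = C z'.
Proof. by move=> h; apply: eq_bigr => i _; rewrite h. Qed.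

Lemma D_f z : D (f z) = C z.
Proof.
rewrite /D; case: pickP => [z' /eqP e | /(_ z)]; last by rewrite eqxx.
by apply: C_eq; apply/phi_f.
Qed.

Lemma C_gen z z' : lprinc (f z') = lprinc (f z) -> C z' = C z.
Proof.
move=> e.
have h a b : lprinc (f a) = lprinc (f b) -> forall i, (\rank (phi i a) <= \rank (phi i b))%N.
  move=> eab i; have := lprinc_self (f a); rewrite eab => /lprincP [s].
  rewrite -fM => /phi_f /(_ i); rewrite phiM => ->; exact: mxrankM_maxr.
apply: eq_bigr => i _; congr (cc _ _ _ _); apply/eqP; rewrite eqn_leq.
by rewrite h // h.
Qed.

Variable w : R -> K.
Hypothesis w0 : w 0 = 0.
Hypothesis wP : forall x y, lprinc x = lprinc y -> w x = w y.
Hypothesis wS : forall x, x != 0 -> \sum_(y in lprinc x) w y = (#|lprinc x|)%:R.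

Lemma C_J z : z \in jrad R -> C z = 1.
Proof.
by move=> /phiK h; rewrite /C big1 // => i _; rewrite h mxrank0 cc0.
Qed.

Lemma lemA n z : (#|lprinc (f z)| <= n)%N -> w (f z) = 1 - C z.
Proof.
elim: n z => [|n IH] z.
  by rewrite leqn0 => /eqP /card0_eq /(_ (f z)); rewrite lprinc_self.
move=> hn; case: (boolP (f z == 0)) => [fz0|fz0].
  by rewrite (eqP fz0) w0 C_J ?subrr // -fK.
set y0 := f z; set P := lprinc y0.
have sD : \sum_(u in P) D u = 0.
  have := fiber y0 D; rewrite (eq_bigr (fun r => C (r * z))); last first.
    by move=> r _; rewrite /y0 -fM D_f.
  rewrite sumC -?fK // => /esym /eqP; rewrite mulf_eq0 pnatr_eq0 => /orP [|/eqP //].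
  by move=> /eqP /card0_eq /(_ 0); rewrite inE mul0r eqxx.
have key : \sum_(u in P) (w u - (1 - D u)) =
   #|[set u in P | lprinc u == P]|%:R * (w y0 - (1 - C z)).
  rewrite (bigID (fun u => lprinc u == P)) /= [X in _ + X]big1 ?addr0; last first.
    move=> u /andP [uP hu]; move: (uP) => /lprincP [r ur].
    have lt : (#|lprinc u| < #|P|)%N.
      by apply: proper_card; rewrite properEneq hu lprinc_sub.
    rewrite ur /y0 -fM D_f IH ?subrr //.
    by rewrite fM -/y0 -ur; move: lt hn; rewrite -/P; lia.
  rewrite mulr_natl -sumr_const; apply: eq_big => [u|u]; first by rewrite !inE.
  move=> /andP [uP hu]; rewrite (wP (eqP hu)); move: (uP) => /lprincP [r ur].
  by rewrite ur /y0 -fM D_f (C_gen (_ : lprinc (f (r * z)) = lprinc (f z))) // fM -ur (eqP hu).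
have : \sum_(u in P) (w u - (1 - D u)) = 0.
  rewrite big_split /= wS // sumrN big_split /= sumrN sD oppr0 addr0 sumr_const.
  by rewrite subrr.
rewrite key => /eqP; rewrite mulf_eq0 pnatr_eq0 => /orP [|]; last by rewrite subr_eq0 => /eqP.
by move=> /eqP /card0_eq /(_ y0); rewrite !inE lprinc_self eqxx.
Qed.

Hypothesis fS : forall y, y \in soc_l R <-> exists x, f x = y.

Lemma lideal_lprinc (y : R) : is_lideal (lprinc y).
Proof.
apply/and3P; split.
- by apply/lprincP; exists 0; rewrite mul0r.
- apply/forallP => a; apply/implyP => /lprincP [ra ->].
  apply/forallP => b; apply/implyP => /lprincP [rb ->].
  by apply/lprincP; exists (ra - rb); rewrite mulrBl.
- apply/forallP => r; apply/forallP => a; apply/implyP => /lprincP [ra ->].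
  by apply/lprincP; exists (r * ra); rewrite mulrA.
Qed.

Lemma min_in_soc (I : {set R}) : is_min_lideal I -> I \subset soc_l R.
Proof.
by move=> Imin; rewrite /soc_l; apply/bigcapsP => J /andP [_ /forallP H]; exact: (implyP (H I) Imin).
Qed.

Lemma exists_min (y : R) : y != 0 ->
  exists u, [/\ u \in lprinc y, u \in soc_l R & u != 0].
Proof.
move=> y0; set P := lprinc y.
pose Q (I : {set R}) := [&& is_lideal I, I != [set 0] & I \subset P].
have QP : Q P.
  rewrite /Q lideal_lprinc subxx andbT /=; apply: contra y0 => /eqP e.
  by have := lprinc_self y; rewrite -/P e inE.
case: (arg_minnP (fun I : {set R} => #|I|) QP) => I0 /and3P [lI nI sI] Imin.
have I0min : is_min_lideal I0.
  apply/and3P; split => //; apply/forallP => J; apply/implyP => /andP [lJ pJ].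
  apply: contraT => hJ; have := Imin J; rewrite /Q lJ hJ /=.
  move: (pJ); rewrite properEneq => /andP [_ sJ].
  rewrite (subset_trans sJ sI) => /(_ isT) h; have := proper_card pJ; by rewrite ltnNge h.
have [u uI u0] : exists2 u, u \in I0 & u != 0.
  apply/exists_inP; apply: contraR nI; rewrite negb_exists_in => /forall_inP hh.
  apply/eqP/setP => u; rewrite inE; apply/idP/eqP => [uI|->].
    by apply/eqP; have := hh u uI; rewrite negbK.
  by case/and3P: lI.
exists u; split => //; first exact: (subsetP sI u uI).
exact: (subsetP (min_in_soc I0min) u uI).
Qed.

Lemma phi_sum j (G : 'I_t -> R) : phi j (\sum_i G i) = \sum_i phi j (G i).
Proof. exact: (big_morph (phi j) (phiD j) (phi0 j)). Qed.

Lemma f_sum (G : 'I_t -> R) : f (\sum_i G i) = \sum_i f (G i).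
Proof. exact: (big_morph f fD f0). Qed.

Lemma principal (y : R) : exists z0, (f z0 \in lprinc y) /\ (forall z, f z \in lprinc y -> exists r, f z = r * f z0).
Proof.
set P := lprinc y.
have Pz0 : 0 \in P by apply/lprincP; exists 0; rewrite mul0r.
have PD a b : a \in P -> b \in P -> a + b \in P.
  by move=> /lprincP [ra ->] /lprincP [rb ->]; apply/lprincP; exists (ra + rb); rewrite mulrDl.
have PM r a : a \in P -> r * a \in P.
  by move=> /lprincP [ra ->]; apply/lprincP; exists (r * ra); rewrite mulrA.
set Lp := [set z : R | f z \in P].
pose S i := [set phi i z | z in Lp].
pose V i := (\sum_(A in S i) A)%MS.
have SV i : V i \in S i.
  have : (V i <= V i)%MS by apply: submx_refl.
  move/sub_sumsmxP => [u_ ->]; apply: (big_ind (fun B => B \in S i)).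
  - by apply/imsetP; exists 0; [rewrite inE f0 | rewrite phi0].
  - move=> a b /imsetP [za hza ->] /imsetP [zb hzb ->]; apply/imsetP; exists (za + zb).
      by move: hza hzb; rewrite !inE fD; apply: PD.
    by rewrite phiD.
  - move=> A /imsetP [zA hA ->]; have [s [hs _]] := surj1 (u_ (phi i zA)).
    apply/imsetP; exists (s * zA); last by rewrite phiM hs.
    by move: hA; rewrite !inE fM; apply: PM.
have le i z : z \in Lp -> (phi i z <= V i)%MS.
  by move=> zL; apply: (sumsmx_sup (phi i z)) => //; apply/imsetP; exists z.
pose l i := odflt 0 [pick l | (l \in Lp) && (phi i l == V i)].
have lP i : l i \in Lp /\ phi i (l i) = V i.
  have /imsetP [l0 hl0 e] := SV i; rewrite /l; case: pickP => [l' /andP [h1 /eqP h2] //|/(_ l0)].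
  by rewrite hl0 e eqxx.
pose e i := odflt 0 [pick e | (phi i e == 1%:M) && [forall k, (k != i) ==> (phi k e == 0)]].
have eP i : phi i (e i) = 1%:M /\ forall k, k != i -> phi k (e i) = 0.
  have [s [hs1 hs2]] := surj1 (1%:M : 'M[F i]_(m i)).
  rewrite /e; case: pickP => [e' /andP [/eqP h1 /forallP h2]|/(_ s)].
    by split => // k ki; apply/eqP; apply: (implyP (h2 k)).
  rewrite hs1 eqxx /=; case/negP; apply/forallP => k; apply/implyP => ki.
  by rewrite hs2.
set z0 := \sum_(i < t) e i * l i.
have phz j : phi j z0 = V j.
  rewrite phi_sum (bigD1 j) //= big1 => [|k kj]; last first.
    by rewrite phiM (proj2 (eP k)) 1?eq_sym // mul0mx.
  by rewrite addr0 phiM (proj1 (eP j)) mul1mx (proj2 (lP j)).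
exists z0; split.
  rewrite f_sum; apply: (big_ind (fun B => B \in P)).
  - exact: Pz0.
  - exact: PD.
  - by move=> i _; rewrite fM; apply: PM; have := proj1 (lP i); rewrite inE.
move=> z fz; have zL : z \in Lp by rewrite inE.
pose X j := odflt 0 [pick X | phi j z == X *m V j].
have XP j : phi j z = X j *m V j.
  have /submxP [X0 hX0] := le j z zL; rewrite /X; case: pickP => [X' /eqP //|/(_ X0)].
  by rewrite hX0 eqxx.
have [r hr] := phiS X.
exists r; rewrite -fM; apply/phi_f => i.
by rewrite phiM hr phz XP.
Qed.

Lemma lemB n y : (#|lprinc y| <= n)%N -> y \notin soc_l R -> w y = 1.
Proof.
elim: n y => [|n IH] y.
  by rewrite leqn0 => /eqP /card0_eq /(_ y); rewrite lprinc_self.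
move=> hn ys.
have y0 : y != 0 by apply: contra ys => /eqP ->; apply/fS; exists 0; rewrite f0.
set P := lprinc y.
have [z0 [z0P hz0]] := principal y.
have [u0 [u0P u0s u00]] := exists_min y0.
have fz00 : f z0 != 0.
  apply: contra u00 => /eqP e; have [z1 ez1] := (fS u0).1 u0s.
  have /hz0 [r hr] : f z1 \in lprinc y by rewrite ez1.
  by rewrite -ez1 hr e mulr0.
have P0E u : (u \in P) && (u \in soc_l R) = (u \in lprinc (f z0)).
  apply/andP/lprincP => [[uP /fS [z ez]]|[r ->]].
    have /hz0 [r hr] : f z \in lprinc y by rewrite ez.
    by exists r; rewrite -ez.
  split; first by move: z0P => /lprincP [s ->]; apply/lprincP; exists (r * s); rewrite mulrA.
  by apply/fS; exists (r * z0); rewrite fM.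
have : \sum_(u in P) (w u - 1) = 0.
  by rewrite big_split /= wS // sumrN sumr_const subrr.
rewrite (bigID (fun u => u \in soc_l R)) /=.
rewrite (eq_bigl (fun u => u \in lprinc (f z0))); last by move=> u; rewrite P0E.
rewrite big_split /= wS // sumrN sumr_const subrr add0r.
rewrite (bigID (fun u => lprinc u == P)) /= [X in _ + X]big1 ?addr0; last first.
  move=> u /andP [/andP [uP us] hu].
  have lt : (#|lprinc u| < #|P|)%N.
    by apply: proper_card; rewrite properEneq hu lprinc_sub.
  by rewrite (IH u) ?subrr //; move: lt hn; rewrite -/P; lia.
rewrite (eq_bigr (fun _ => w y - 1)); last by move=> u /andP [_ /eqP /wP ->].
rewrite sumr_const => /eqP; rewrite -mulr_natl mulf_eq0 pnatr_eq0 => /orP [|]; last by rewrite subr_eq0 => /eqP.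
have hy : (y \in P) && (y \notin soc_l R) && (lprinc y == P) by rewrite lprinc_self ys eqxx.
by move=> /eqP /card0_eq /(_ y); rewrite /in_mem /= hy.
Qed.

Lemma main_iff : (forall i, 0 < m i)%N ->
  (exists x : R, x != 0 /\ w x = 0) <->
  (2 <= #|[set i : 'I_t | (#|F i| == 2) && (m i == 1)]|)%N.
Proof.
move=> Hm; split.
  move=> [x [x0 wx]].
  case: (boolP (x \in soc_l R)) => xs; last first.
    by move: wx; rewrite (@lemB #|lprinc x| x) // => /eqP; rewrite oner_eq0.
  have [z ez] := (fS x).1 xs.
  move: wx; rewrite -ez (@lemA #|lprinc (f z)| z) // => /eqP; rewrite subr_eq0 eq_sym => /eqP Cz.
  apply: (@final_count K t (fun i => #|F i|) m (fun i => \rank (phi i z))) => //.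
  - by move=> i; apply: card_F1.
  - by move=> i; apply: rank_leq_row.
  - apply/existsP; apply: contraR x0; rewrite negb_exists => /forallP h.
    rewrite -ez; apply/eqP; apply/eqP; rewrite fK; apply/phiK => i.
    by apply/eqP; rewrite -mxrank_eq0; have := h i; rewrite negbK.
move=> /card_gt1P [i [j [hi hj ij]]].
move: hi hj; rewrite !inE => /andP [/eqP Fi /eqP mi] /andP [/eqP Fj /eqP mj].
have [si [si1 si2]] := surj1 (1%:M : 'M[F i]_(m i)).
have [sj [sj1 sj2]] := surj1 (1%:M : 'M[F j]_(m j)).
set z := si + sj.
have Cz : C z = 1.
  rewrite /C (bigD1 i) //= (bigD1 j) /=; last by rewrite eq_sym.
  rewrite [X in _ * (_ * X)]big1 => [|k /andP [ki kj]]; last first.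
    by rewrite phiD si2 // sj2 // addr0 mxrank0 cc0.
  have ei : phi i z = 1%:M by rewrite phiD si1 (sj2 i ij) addr0.
  have ji : j != i by rewrite eq_sym.
  have ej : phi j z = 1%:M by rewrite phiD sj1 (si2 j ji) add0r.
  by rewrite mulr1 ei ej !mxrank1 Fi Fj mi mj cc211; ring.
exists (f z); split; last by rewrite (@lemA #|lprinc (f z)| z) // Cz subrr.
rewrite fK; apply/negP => /phiK /(_ i); rewrite phiD si1 (sj2 i ij) addr0 => /eqP.
by rewrite -mxrank_eq0 mxrank1 mi.
Qed.
End Ring.

End Aux.

Theorem corollary4p3 (R : finNzRingType) (K : realType)
  (t : nat) (F : 'I_t -> finFieldType) (m : 'I_t -> nat)
  (phi : forall i, R -> 'M[F i]_(m i)) (w : R -> K) :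
  frobenius R ->
  wedderburn_artin phi ->
  normalized_homogeneous_weight w ->
  (exists x : R, x != 0 /\ w x = 0) <->
  (2 <= #|[set i : 'I_t | (#|F i| == 2) && (m i == 1)]|)%N.
Proof.
move=> [[f [fD fM fK fS]] _] [Hm [phiD phiM phi1 phiS phiK]] [w0 wP wS].
exact: (Aux.main_iff phiD phiM phiS phiK fD fM fK w0 wP wS fS Hm).
Qed.
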